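(* Assume $q \in U_0$ and, for each $i\in\{1,2\}$, $q\bmod n_i$ is a quadratic residue modulo $n_i$. Let $\omega_{(0,0,0)}$ denote the minimum odd-like weight of the cyclic code over $\mathrm{GF}(q)$ of length $n$ with generator polynomial $u_0(x)d_0^{(n_1)}(x)d_0^{(n_2)}(x)$. For $j\in\{1,2\}$ let $\omega_1^{(n/n_j)}$ denote the minimum odd-like weight of the cyclic code of length $n$ over $\mathrm{GF}(q)$ with generator polynomial $(x^n-1)/\big((x-1)d_1^{(n_j)}(x)\big)$. Then $$\omega_{(0,0,0)} \ge \sqrt{\max\big(\omega_1^{(n/n_1)},\ \omega_1^{(n/n_2)}\big)}.$$
   Context: Let $n_1,n_2$ be distinct odd primes, $n=n_1n_2$, and let $q$ be a prime power with $\gcd(q,n)=1$. Let $d=\gcd(n_1-1,n_2-1)$ and $e=(n_1-1)(n_2-1)/d$. Let $g_1,g_2$ be primitive roots modulo $n_1,n_2$ respectively, let $g$ be the integer modulo $n$ with $g\equiv g_1 \pmod{n_1}$, $g\equiv g_2\pmod{n_2}$, and let $\nu$ be the integer modulo $n$ with $\nu\equiv g\pmod{n_1}$, $\nu\equiv 1\pmod{n_2}$. It is known that every element of $\mathbb{Z}_n^*$ can be written uniquely as $g^s\nu^i$ with $0\le s\le e-1$, $0\le i\le d-1$. Define $U_0=\{g^s\nu^i: 0\le s\le e-1,\ 0\le i \le d-1,\ i \text{ even}\}$ and $U_1=\{g^s\nu^i: i \text{ odd}\}$ (same ranges). For $j\in\{1,2\}$ let $D_0^{(n_j)}$, $D_1^{(n_j)}$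 be the sets of quadratic residues and nonresidues modulo $n_j$. Let $N=\mathrm{ord}_n(q)$ and $\theta$ a primitive $n$-th root of unity in $\mathrm{GF}(q^N)$. Define $d_i^{(n_1)}(x)=\prod_{j\in D_i^{(n_1)}}(x-\theta^{n_2 j})$, $d_i^{(n_2)}(x)=\prod_{j\in D_i^{(n_2)}}(x-\theta^{n_1 j})$, and $u_j(x)=\prod_{i\in U_j}(x-\theta^i)$; under the hypotheses these lie in $\mathrm{GF}(q)[x]$. Cyclic codes of length $n$ are identified with ideals of $\mathrm{GF}(q)[x]/(x^n-1)$. A codeword $(c_0,\dots,c_{n-1})$ is odd-like if $\sum_i c_i\neq 0$; the minimum odd-like weight of a code is the minimum Hamming weight of its odd-like codewords. *)

(* Defs.v *)
From HB Require Import structures.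
From mathcomp Require Import all_boot all_order all_algebra all_field.
Set Implicit Arguments. Unset Strict Implicit. Unset Printing Implicit Defensive.
Import GRing.Theory.

Definition is_prim_root_mod (p g : nat) : bool :=
  coprime g p && [forall k : 'I_(p.-1), (0 < k) ==> (g ^ k %% p != 1)].

Definition qr_mod (p a : nat) : bool :=
  (a %% p != 0) && [exists x : 'I_p, (x ^ 2) %% p == a %% p].

Definition D0 (p : nat) : seq nat := [seq j <- iota 1 p.-1 | qr_mod p j].
Definition D1 (p : nat) : seq nat := [seq j <- iota 1 p.-1 | ~~ qr_mod p j].

Definition Useq (n e d g nu : nat) (b : bool) : seq nat :=
  undup [seq (g ^ s * nu ^ i) %% n
        | s <- iota 0 e, i <- [seq i <- iota 0 d | odd i == b]].

Local Open Scope ring_scope.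

Definition dpoly (L : fieldType) (theta : L) (m : nat) (D : seq nat) : {poly L} :=
  \prod_(j <- D) ('X - (theta ^+ (m * j))%:P).

Definition upoly (L : fieldType) (theta : L) (U : seq nat) : {poly L} :=
  \prod_(i <- U) ('X - (theta ^+ i)%:P).

(* Words of length n over F: c = (c_0,...,c_{n-1}) <-> c_0 + c_1 x + ... *)
Definition wt (F : fieldType) (n : nat) (c : n.-tuple F) : nat :=
  count (fun a => a != 0) c.

Definition oddlike (F : fieldType) (n : nat) (c : n.-tuple F) : bool :=
  \sum_(a <- c) a != 0.

(* c belongs to the cyclic code of length n over F with generator gen
   (gen given in the extension L, where it is defined): gen | c(x). *)
Definition in_code (F : fieldType) (L : fieldExtType F) (n : nat)
  (gen : {poly L}) (c : n.-tuple F) : bool :=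
  gen %| map_poly (in_alg L) (Poly c).

(* minimum Hamming weight of the odd-like codewords
   (default n, never smaller than an actual odd-like weight) *)
Definition min_oddlike_weight (F : finFieldType) (L : fieldExtType F) (n : nat)
  (gen : {poly L}) : nat :=
  \big[minn/n]_(c : n.-tuple F | in_code gen c && oddlike c) wt c.

(* Main.v *)
Require Import Defs.
From HB Require Import structures.
From mathcomp Require Import all_boot all_order all_algebra all_field.
From mathcomp Require Import zify ring.
From mathcomp Require cyclic.
Import GRing.Theory.
Set Implicit Arguments. Unset Strict Implicit. Unset Printing Implicit Defensive.

Lemma modM_congr (n a a' b b' : nat) : a = a' %[mod n] -> b = b' %[mod n] ->
  a * b = a' * b' %[mod n].
Proof. by move=> Ha Hb; rewrite -modnMm Ha Hb modnMm. Qed.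

Lemma modMl_congr (n a a' b : nat) : a = a' %[mod n] -> a * b = a' * b %[mod n].
Proof. by move=> Ha; apply: modM_congr. Qed.

Lemma modMr_congr (n a b b' : nat) : b = b' %[mod n] -> a * b = a * b' %[mod n].
Proof. by move=> Hb; apply: modM_congr. Qed.

Lemma modX_congr (n a a' k : nat) : a = a' %[mod n] -> a ^ k = a' ^ k %[mod n].
Proof. by move=> Ha; rewrite -modnXm Ha modnXm. Qed.

Lemma mod_weaken (m n a b : nat) : m %| n -> a = b %[mod n] -> a = b %[mod m].
Proof. by move=> mn H; rewrite -(modn_dvdm a mn) H modn_dvdm. Qed.

Lemma exp1_mul (p g M k : nat) : g ^ M = 1 %[mod p] -> g ^ (M * k) = 1 %[mod p].
Proof. by move=> H; rewrite expnM (modX_congr k H) exp1n. Qed.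

Lemma exp_period (p g M x : nat) : g ^ M = 1 %[mod p] ->
  g ^ x = g ^ (x %% M) %[mod p].
Proof.
move=> H; rewrite {1}(divn_eq x M) expnD mulnC.
rewrite -[X in _ = X %[mod p]]muln1.
apply: modM_congr => //; rewrite mulnC; exact: exp1_mul.
Qed.

Lemma fermat1 (p a : nat) : prime p -> coprime a p -> a ^ p.-1 = 1 %[mod p].
Proof. by move=> pp co; rewrite -(totient_prime pp) cyclic.Euler_exp_totient. Qed.

Lemma prim_mod (p g g' : nat) : is_prim_root_mod p g' -> g = g' %[mod p] ->
  is_prim_root_mod p g.
Proof.
rewrite /is_prim_root_mod => /andP[co /forallP H] E; apply/andP; split.
  by rewrite -(coprime_modl g) E coprime_modl.
apply/forallP => k; have := H k.
by rewrite (modX_congr k E).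
Qed.

Lemma prim_cop (p g : nat) : is_prim_root_mod p g -> coprime g p.
Proof. by case/andP. Qed.

Lemma cop_mod0 (p a : nat) : 1 < p -> coprime a p -> a %% p != 0.
Proof.
move=> p1 co; apply/negP => /eqP H.
move: co; rewrite -coprime_modl H /coprime gcd0n; lia.
Qed.

Lemma prim_inj_aux (p g i j : nat) : prime p -> is_prim_root_mod p g ->
  i < j < p.-1 -> g ^ i = g ^ j %[mod p] -> False.
Proof.
move=> pp /andP[co /forallP H] /andP[ij jp] E.
have jp' : j - i < p.-1 by clear -ij jp; lia.
have := H (Ordinal jp'); rewrite /= subn_gt0 ij /= => /eqP; apply.
have F := fermat1 pp co.
have A : g ^ (j - i) * g ^ p.-1 = g ^ (j - i) * 1 %[mod p] by apply: modM_congr.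
have B : g ^ (j - i) * g ^ p.-1 = g ^ j * g ^ (p.-1 - i).
  by rewrite -!expnD; congr (g ^ _); clear -ij jp; lia.
have C : g ^ j * g ^ (p.-1 - i) = g ^ i * g ^ (p.-1 - i) %[mod p].
  by apply: modM_congr.
have D : g ^ i * g ^ (p.-1 - i) = g ^ p.-1 by rewrite -expnD; congr (g ^ _); clear -ij jp; lia.
by rewrite -[g ^ (j - i)]muln1 -A B C D F modn_small // prime_gt1.
Qed.

Lemma prim_surj (p g a : nat) : prime p -> is_prim_root_mod p g -> a %% p != 0 ->
  exists t, g ^ t = a %[mod p].
Proof.
move=> pp pg a0.
have p0 : 0 < p by rewrite prime_gt0.
pose f := fun k : 'I_(p.-1) => (Ordinal (ltn_pmod (g ^ k) p0) : 'I_p).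
have finj : injective f.
  move=> i j /(congr1 val) /= E; apply/eqP; case: (ltngtP i j) => [ij|ij|/val_inj->] //.
  - by exfalso; apply: (prim_inj_aux pp pg (i:=i) (j:=j)) => //; rewrite ij ltn_ord.
  - by exfalso; apply: (prim_inj_aux pp pg (i:=j) (j:=i)) => //; rewrite ij ltn_ord.
pose x0 : 'I_p := Ordinal p0.
have sub : [set f k | k in 'I_(p.-1)] \subset [set~ x0].
  apply/subsetP => y /imsetP[k _ ->]; rewrite !inE; apply/eqP => /(congr1 val) /=.
  move/eqP; apply/negP; apply: cop_mod0; first by rewrite prime_gt1.
  by rewrite coprimeXl // (prim_cop pg).
have ca : #|[set f k | k in 'I_(p.-1)]| = #|[set~ x0]|.
  by rewrite cardsC1 (card_imset _ finj) !card_ord.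
have := (subset_cardP ca); rewrite sub => /(_ isT) Eq.
have xa : (Ordinal (ltn_pmod a p0) : 'I_p) \in [set~ x0].
  by rewrite !inE; apply/eqP => /(congr1 val) /= /eqP; apply/negP.
move: xa; rewrite -Eq => /imsetP[k _ /(congr1 val) /= E].
by exists k.
Qed.

Lemma qr_even (p g a h : nat) : prime p -> coprime g p -> a = g ^ (2 * h) %[mod p] ->
  qr_mod p a.
Proof.
move=> pp co E; have p0 : 0 < p by rewrite prime_gt0.
apply/andP; split.
  by rewrite E; apply: cop_mod0; [rewrite prime_gt1|rewrite coprimeXl].
apply/existsP; exists (Ordinal (ltn_pmod (g ^ h) p0)) => /=.
by rewrite modnXm -expnM mulnC E.
Qed.

Lemma nr_odd (p g a : nat) : prime p -> is_prim_root_mod p g -> a %% p != 0 ->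
  ~~ qr_mod p a -> exists t, odd t /\ a = g ^ t %[mod p].
Proof.
move=> pp pg a0 nq; have [t Et] := prim_surj pp pg a0.
case ot: (odd t); first by exists t.
exfalso; move/negP: nq; apply; apply: (qr_even (h := t./2) pp (prim_cop pg)).
by rewrite -Et -{1}(odd_double_half t) ot add0n -mul2n.
Qed.

Lemma crt_eq (n1 n2 x y : nat) : coprime n1 n2 -> x = y %[mod n1] -> x = y %[mod n2] ->
  x = y %[mod n1 * n2].
Proof. by move=> co H1 H2; apply/eqP; rewrite chinese_remainder // H1 H2 !eqxx. Qed.

Lemma rep (n1 n2 g1 g2 g nu a : nat) :
  prime n1 -> prime n2 -> n1 != n2 ->
  is_prim_root_mod n1 g1 -> is_prim_root_mod n2 g2 ->
  g = g1 %[mod n1] -> g = g2 %[mod n2] -> nu = g %[mod n1] -> nu = 1 %[mod n2] ->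
  coprime a (n1 * n2) ->
  exists s i, s < n1.-1 * n2.-1 %/ gcdn n1.-1 n2.-1 /\ i < gcdn n1.-1 n2.-1 /\
    a = g ^ s * nu ^ i %[mod n1 * n2].
Proof.
move=> pr1 pr2 n12 pg1' pg2' Eg1 Eg2 Enu1 Enu2 coa.
have pg1 := prim_mod pg1' Eg1; have pg2 := prim_mod pg2' Eg2.
have pnu := prim_mod pg1 Enu1.
have cop12 : coprime n1 n2 by rewrite prime_coprime // dvdn_prime2.
have Fg1 := fermat1 pr1 (prim_cop pg1).
have Fg2 := fermat1 pr2 (prim_cop pg2).
have Fnu2 : forall k, nu ^ k = 1 %[mod n2] by move=> k; rewrite (modX_congr k Enu2) exp1n.
set M1 := n1.-1 in Fg1 *; set M2 := n2.-1 in Fg2 *.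
have M1p : 0 < M1 by rewrite /M1 -ltnS prednK ?prime_gt1 ?prime_gt0.
have M2p : 0 < M2 by rewrite /M2 -ltnS prednK ?prime_gt1 ?prime_gt0.
set d := gcdn M1 M2; set e := M1 * M2 %/ d.
have dp : 0 < d by rewrite gcdn_gt0 M1p.
have e1 : e = M1 * (M2 %/ d) by rewrite muln_divA // dvdn_gcdr.
have e2 : e = M2 * (M1 %/ d) by rewrite muln_divA ?dvdn_gcdl // mulnC.
have ep : 0 < e by rewrite e1 muln_gt0 M1p divn_gt0 // dvdn_leq // dvdn_gcdr.
have Ge : g ^ e = 1 %[mod n1 * n2].
  apply: crt_eq => //; [rewrite e1|rewrite e2]; exact: exp1_mul.
have [x Nd] : exists x, nu ^ d = g ^ x %[mod n1 * n2].
  have [b _ dv] := Bezoutl M2 M1p.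
  exists (M1.-1 * b * M2); apply: crt_eq => //; last first.
    by rewrite Fnu2 [M1.-1 * b * M2]mulnC exp1_mul.
  rewrite (modX_congr d Enu1) (exp_period _ Fg1) [in RHS](exp_period _ Fg1).
  congr (g ^ _ %% n1).
  case/dvdnP: dv => k Hk.
  have H : M1.-1 * b * M2 + k * M1 = b * M2 * M1 + d.
    rewrite -Hk -/d.
    have key : forall P B N D, P * B * N + (D + B * N) = B * N * P.+1 + D.
      by move=> P B N D; lia.
    by rewrite key prednK.
  by rewrite -(modnMDl k (M1.-1 * b * M2)) [k * M1 + _]addnC H modnMDl.
have an2 : a %% n2 != 0.
  by apply: cop_mod0; [rewrite prime_gt1 | move: coa; rewrite coprimeMr => /andP[]].
have [t Et] := prim_surj pr2 pg2 an2.
set L0 := M1 * M2.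
have L0p : 0 < L0 by rewrite muln_gt0 M1p.
have GL : g ^ (L0 * t) = 1 %[mod n1 * n2].
  apply: crt_eq => //; [rewrite /L0 -mulnA | rewrite /L0 [M1 * M2]mulnC -mulnA]; exact: exp1_mul.
set b := a * g ^ ((L0 - 1) * t).
have ELt : (L0 - 1) * t + t = L0 * t by rewrite -{2}[t]mul1n -mulnDl subnK.
have Eb2 : b = 1 %[mod n2].
  rewrite /b (modMl_congr (g ^ ((L0 - 1) * t)) (esym Et)) -expnD addnC ELt.
  by rewrite /L0 [M1 * M2]mulnC -mulnA exp1_mul.
have bn1 : b %% n1 != 0.
  apply: cop_mod0; first by rewrite prime_gt1.
  rewrite coprimeMl coprimeXl ?(prim_cop pg1) // andbT.
  by move: coa; rewrite coprimeMr => /andP[].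
have [m Em] := prim_surj pr1 pnu bn1.
have Emn : nu ^ m = b %[mod n1 * n2] by apply: crt_eq => //; rewrite Fnu2 Eb2.
have Ea : a = nu ^ m * g ^ t %[mod n1 * n2].
  rewrite (modMl_congr (g ^ t) Emn) /b -mulnA -expnD ELt.
  by rewrite -[a in LHS]muln1 (modMr_congr a (esym GL)).
exists ((x * (m %/ d) + t) %% e), (m %% d); split; first by rewrite ltn_mod.
split; first by rewrite ltn_mod.
rewrite Ea {1}(divn_eq m d) expnD mulnC expnM.
rewrite -expnM [m %/ d * d]mulnC expnM mulnA.
rewrite (modMl_congr (nu ^ (m %% d)) (modMr_congr (g ^ t) (modX_congr (m %/ d) Nd))).
rewrite -expnM -expnD addnC.
by rewrite (modMl_congr _ (exp_period _ Ge)).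
Qed.

Lemma Ge_lem (n1 n2 g1 g2 g : nat) :
  prime n1 -> prime n2 -> n1 != n2 ->
  is_prim_root_mod n1 g1 -> is_prim_root_mod n2 g2 ->
  g = g1 %[mod n1] -> g = g2 %[mod n2] ->
  g ^ (n1.-1 * n2.-1 %/ gcdn n1.-1 n2.-1) = 1 %[mod n1 * n2].
Proof.
move=> pr1 pr2 n12 pg1' pg2' Eg1 Eg2.
have pg1 := prim_mod pg1' Eg1; have pg2 := prim_mod pg2' Eg2.
have cop12 : coprime n1 n2 by rewrite prime_coprime // dvdn_prime2.
have Fg1 := fermat1 pr1 (prim_cop pg1).
have Fg2 := fermat1 pr2 (prim_cop pg2).
apply: crt_eq => //.
  by rewrite -muln_divA ?dvdn_gcdr // exp1_mul.
by rewrite mulnC -muln_divA ?dvdn_gcdl // exp1_mul.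
Qed.

Lemma Gnu_lem (n1 n2 g1 g nu : nat) :
  prime n1 -> prime n2 -> n1 != n2 ->
  is_prim_root_mod n1 g1 -> g = g1 %[mod n1] -> nu = g %[mod n1] -> nu = 1 %[mod n2] ->
  nu ^ (n1.-1 * n2.-1) = 1 %[mod n1 * n2].
Proof.
move=> pr1 pr2 n12 pg1' Eg1 Enu1 Enu2.
have pnu := prim_mod (prim_mod pg1' Eg1) Enu1.
have cop12 : coprime n1 n2 by rewrite prime_coprime // dvdn_prime2.
apply: crt_eq => //; first by rewrite exp1_mul // fermat1 // prim_cop.
by rewrite (modX_congr _ Enu2) exp1n.
Qed.

Definition Zs (n1 n2 g nu x : nat) : Prop :=
  (x %% (n1 * n2) \in Useq (n1 * n2) (n1.-1 * n2.-1 %/ gcdn n1.-1 n2.-1)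
                      (gcdn n1.-1 n2.-1) g nu false)
  \/ (exists m, x = n2 * m /\ qr_mod n1 m) \/ (exists m, x = n1 * m /\ qr_mod n2 m).

Lemma mem_U0 (n e d g nu s i : nat) : s < e -> i < d -> ~~ odd i ->
  (g ^ s * nu ^ i) %% n \in Useq n e d g nu false.
Proof.
move=> se id oi; rewrite /Useq mem_undup.
apply: (allpairs_f (fun s i => (g ^ s * nu ^ i) %% n)).
  by rewrite mem_iota.
by rewrite mem_filter mem_iota /= add0n id andbT; case: (odd i) oi.
Qed.

Lemma Zs_mod (n1 n2 g nu x y : nat) : x = y %[mod n1 * n2] ->
  y %% (n1 * n2) \in Useq (n1 * n2) (n1.-1 * n2.-1 %/ gcdn n1.-1 n2.-1)
                      (gcdn n1.-1 n2.-1) g nu false -> Zs n1 n2 g nu x.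
Proof. by move=> E H; left; rewrite E. Qed.

Lemma noncop_case (n1 n2 k : nat) : prime n1 -> prime n2 -> n1 != n2 -> 0 < k < n1 * n2 ->
  ~~ coprime k (n1 * n2) ->
  (n1 %| k /\ ~~ (n2 %| k)) \/ (n2 %| k /\ ~~ (n1 %| k)).
Proof.
move=> pr1 pr2 n12 /andP[k0 kn].
rewrite coprimeMr !(coprime_sym k) !prime_coprime // negb_and !negbK.
have both : n1 %| k -> n2 %| k -> False.
  move=> d1 d2.
  have : n1 * n2 %| k.
    by rewrite Gauss_dvd ?d1 ?d2 // prime_coprime // dvdn_prime2.
  move/dvdn_leq => /(_ k0); rewrite leqNgt kn //.
case/orP=> [d1|d2].
  by left; split => //; apply/negP => d2; apply: both.
by right; split => //; apply/negP => d1; apply: both.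
Qed.

Lemma cover1 (n1 n2 g1 g2 g nu k : nat) :
  prime n1 -> prime n2 -> n1 != n2 ->
  is_prim_root_mod n1 g1 -> is_prim_root_mod n2 g2 ->
  g = g1 %[mod n1] -> g = g2 %[mod n2] -> nu = g %[mod n1] -> nu = 1 %[mod n2] ->
  0 < k < n1 * n2 -> k \notin map (muln n2) (D1 n1) ->
  Zs n1 n2 g nu k \/ Zs n1 n2 g nu (k * (g * nu ^ (n1.-1 * n2.-1).-1)).
Proof.
move=> pr1 pr2 n12 pg1' pg2' Eg1 Eg2 Enu1 Enu2 kb kD.
have pg1 := prim_mod pg1' Eg1; have pg2 := prim_mod pg2' Eg2.
have Ge := Ge_lem pr1 pr2 n12 pg1' pg2' Eg1 Eg2.
have Gnu := Gnu_lem pr1 pr2 n12 pg1' Eg1 Enu1 Enu2.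
have M1p : 0 < n1.-1 by rewrite -ltnS prednK ?prime_gt1 ?prime_gt0.
have M2p : 0 < n2.-1 by rewrite -ltnS prednK ?prime_gt1 ?prime_gt0.
have L0p : 0 < n1.-1 * n2.-1 by rewrite muln_gt0 M1p.
case: (boolP (coprime k (n1 * n2))) => [cok|ncok].
  have [s [i [se [id E]]]] := rep pr1 pr2 n12 pg1' pg2' Eg1 Eg2 Enu1 Enu2 cok.
  case oi: (odd i); last by left; apply: (Zs_mod E); apply: mem_U0 => //; rewrite oi.
  have i0 : 0 < i by case: i oi {E id}.
  right; apply: (Zs_mod (y := g ^ (s.+1 %% (n1.-1 * n2.-1 %/ gcdn n1.-1 n2.-1))
                              * nu ^ i.-1)); last first.
    apply: mem_U0; first by rewrite ltn_mod; case: (_ %/ _) se.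
      by rewrite (leq_ltn_trans (leq_pred i)).
    by move: oi; rewrite -{1}(prednK i0) /=.
  rewrite (modMl_congr _ E).
  have -> : g ^ s * nu ^ i * (g * nu ^ (n1.-1 * n2.-1).-1)
          = g ^ s.+1 * nu ^ i.-1 * nu ^ (n1.-1 * n2.-1).
    have E2 : nu ^ i * nu ^ (n1.-1 * n2.-1).-1 = nu ^ i.-1 * nu ^ (n1.-1 * n2.-1).
      rewrite -!expnD; congr (nu ^ _).
      by move: i0 L0p; clear; lia.
    by rewrite expnS -[in RHS]mulnA -E2 mulnACA [g * _]mulnC.
  rewrite (modMr_congr _ Gnu) muln1 (modMl_congr _ (exp_period _ Ge)) //.
case: (noncop_case pr1 pr2 n12 kb ncok) => [[d1 nd2]|[d2 nd1]].
  case/dvdnP: d1 => m Em.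
  have m0 : m %% n2 != 0.
    apply/negP => dm; move/negP: nd2; apply.
    by rewrite Em dvdn_mulr.
  case q2: (qr_mod n2 m).
    by left; right; right; exists m; rewrite Em mulnC.
  have [t [ot Et]] := nr_odd pr2 pg2 m0 (negbT q2).
  right; right; right; exists (m * (g * nu ^ (n1.-1 * n2.-1).-1)); split.
    by rewrite Em [m * n1]mulnC -mulnA.
  apply: (qr_even (h := t.+1./2) pr2 (prim_cop pg2)).
  have -> : 2 * t.+1./2 = t.+1.
    by rewrite -{2}(odd_double_half t.+1) /= ot /= add0n mul2n.
  rewrite (modMl_congr _ Et) (modMr_congr _ (modMr_congr _ (modX_congr _ Enu2))).
  by rewrite exp1n muln1 expnS mulnC.
case/dvdnP: d2 => m Em.
case q1: (qr_mod n1 m).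
  by left; right; left; exists m; rewrite Em mulnC.
exfalso; move/negP: kD; apply; rewrite Em mulnC.
apply: map_f; rewrite mem_filter q1 /= mem_iota.
case/andP: kb; rewrite Em => k0 kn.
rewrite muln_gt0 in k0; case/andP: k0 => -> _ /=.
rewrite ltn_pmul2r ?prime_gt0 // in kn.
by rewrite add1n prednK ?prime_gt0.
Qed.

Lemma odd_predn (n : nat) : 0 < n -> odd n.-1 = ~~ odd n.
Proof. by case: n => //= n _; rewrite negbK. Qed.

Lemma cover2 (n1 n2 g1 g2 g nu k : nat) :
  prime n1 -> prime n2 -> n1 != n2 -> odd n1 ->
  is_prim_root_mod n1 g1 -> is_prim_root_mod n2 g2 ->
  g = g1 %[mod n1] -> g = g2 %[mod n2] -> nu = g %[mod n1] -> nu = 1 %[mod n2] ->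
  0 < k < n1 * n2 -> k \notin map (muln n1) (D1 n2) ->
  Zs n1 n2 g nu k \/ Zs n1 n2 g nu (k * nu ^ (n1.-1 * n2.-1).-1).
Proof.
move=> pr1 pr2 n12 on1 pg1' pg2' Eg1 Eg2 Enu1 Enu2 kb kD.
have pg1 := prim_mod pg1' Eg1; have pg2 := prim_mod pg2' Eg2.
have pnu := prim_mod pg1 Enu1.
have Gnu := Gnu_lem pr1 pr2 n12 pg1' Eg1 Enu1 Enu2.
have M1p : 0 < n1.-1 by rewrite -ltnS prednK ?prime_gt1 ?prime_gt0.
have M2p : 0 < n2.-1 by rewrite -ltnS prednK ?prime_gt1 ?prime_gt0.
have L0p : 0 < n1.-1 * n2.-1 by rewrite muln_gt0 M1p.
case: (boolP (coprime k (n1 * n2))) => [cok|ncok].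
  have [s [i [se [id E]]]] := rep pr1 pr2 n12 pg1' pg2' Eg1 Eg2 Enu1 Enu2 cok.
  case oi: (odd i); last by left; apply: (Zs_mod E); apply: mem_U0 => //; rewrite oi.
  have i0 : 0 < i by case: i oi {E id}.
  right; apply: (Zs_mod (y := g ^ s * nu ^ i.-1)); last first.
    apply: mem_U0 => //.
      by rewrite (leq_ltn_trans (leq_pred i)).
    by move: oi; rewrite -{1}(prednK i0) /=.
  rewrite (modMl_congr _ E).
  have -> : g ^ s * nu ^ i * nu ^ (n1.-1 * n2.-1).-1
          = g ^ s * nu ^ i.-1 * nu ^ (n1.-1 * n2.-1).
    rewrite -!mulnA -!expnD; congr (_ * nu ^ _).
    by move: i0 L0p; clear; lia.
  by rewrite (modMr_congr _ Gnu) muln1.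
case: (noncop_case pr1 pr2 n12 kb ncok) => [[d1 nd2]|[d2 nd1]]; last first.
  case/dvdnP: d2 => m Em.
  have m0 : m %% n1 != 0.
    apply/negP => dm; move/negP: nd1; apply.
    by rewrite Em dvdn_mulr.
  case q1: (qr_mod n1 m).
    by left; right; left; exists m; rewrite Em mulnC.
  have [t [ot Et]] := nr_odd pr1 pnu m0 (negbT q1).
  right; right; left; exists (m * nu ^ (n1.-1 * n2.-1).-1); split.
    by rewrite Em [m * n2]mulnC -mulnA.
  apply: (qr_even (h := (t + (n1.-1 * n2.-1).-1)./2) pr1 (prim_cop pnu)).
  have -> : 2 * (t + (n1.-1 * n2.-1).-1)./2 = t + (n1.-1 * n2.-1).-1.
    rewrite -{2}(odd_double_half (t + _)) oddD ot odd_predn // oddM.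
    by rewrite odd_predn ?prime_gt0 // on1 /= add0n mul2n.
  by rewrite (modMl_congr _ Et) expnD.
case/dvdnP: d1 => m Em.
case q2: (qr_mod n2 m).
  by left; right; right; exists m; rewrite Em mulnC.
exfalso; move/negP: kD; apply; rewrite Em mulnC.
apply: map_f; rewrite mem_filter q2 /= mem_iota.
case/andP: kb; rewrite Em => k0 kn.
rewrite muln_gt0 in k0; case/andP: k0 => -> _ /=.
rewrite mulnC ltn_pmul2l ?prime_gt0 // in kn.
by rewrite add1n prednK ?prime_gt0.
Qed.

Local Open Scope ring_scope.

Definition Pc (F : fieldType) (L : fieldExtType F) (n : nat) (c : n.-tuple F) : {poly L} :=
  map_poly (in_alg L) (Poly c).

Lemma hornerPc (F : fieldType) (L : fieldExtType F) (n : nat) (c : n.-tuple F) (w : L) :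
  (Pc L c).[w] = \sum_(i < n) in_alg L (tnth c i) * w ^+ i.
Proof.
rewrite /Pc (horner_coef_wide (n := n)).
  apply: eq_bigr => i _; rewrite coef_map coef_Poly (tnth_nth 0) //.
by rewrite size_map_poly (leq_trans (size_Poly _)) // size_tuple.
Qed.

Lemma expr_modn (L : nzRingType) (w : L) (n m : nat) : w ^+ n = 1 -> w ^+ (m %% n) = w ^+ m.
Proof.
move=> H; rewrite {2}(divn_eq m n) exprD mulnC exprM H expr1n mul1r //.
Qed.

Definition prodw (F : fieldType) (n mu : nat) (c : n.-tuple F) : n.-tuple F :=
  [tuple \sum_(i < n) \sum_(j < n)
     (if ((i + j * mu) %% n == k)%N then tnth c i * tnth c j else 0) | k < n].

Lemma tnth_prodw (F : fieldType) (n mu : nat) (c : n.-tuple F) (k : 'I_n) :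
  tnth (prodw mu c) k = \sum_(i < n) \sum_(j < n)
     (if ((i + j * mu) %% n == k)%N then tnth c i * tnth c j else 0).
Proof. by rewrite tnth_mktuple. Qed.

Lemma sum_pick (F : fieldType) (L : fieldExtType F) (n v : nat) (hv : (v < n)%N)
   (X : F) (w : L) :
  \sum_(k < n) in_alg L (if (v == k)%N then X else 0) * w ^+ k = in_alg L X * w ^+ v.
Proof.
rewrite (bigD1 (Ordinal hv)) //= eqxx big1 ?addr0 // => k kne.
rewrite ifN ?rmorph0 ?scale0r ?mul0r //; apply/eqP => E; move/eqP: kne; apply.
by apply: val_inj; rewrite /= E.
Qed.

Lemma horner_prodw (F : fieldType) (L : fieldExtType F) (n mu : nat) (c : n.-tuple F)
   (w : L) : w ^+ n = 1 ->
  (Pc L (prodw mu c)).[w] = (Pc L c).[w] * (Pc L c).[w ^+ mu].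
Proof.
move=> wn; rewrite !hornerPc.
under eq_bigr => k _ do rewrite tnth_prodw raddf_sum mulr_suml.
rewrite exchange_big.
under eq_bigr => i _ do (under eq_bigr => k _ do rewrite raddf_sum mulr_suml;
                         rewrite exchange_big).
rewrite mulr_suml; apply: eq_bigr => i _.
rewrite mulr_sumr; apply: eq_bigr => j _.
have n0 : (0 < n)%N := leq_ltn_trans (leq0n i) (ltn_ord i).
rewrite sum_pick ?ltn_pmod // expr_modn // rmorphM -exprM exprD mulnC.
by rewrite mulrACA.
Qed.

Lemma sum_prodw (F : fieldType) (L : fieldExtType F) (n mu : nat) (c : n.-tuple F) :
  \sum_(a <- prodw mu c) a = (\sum_(a <- c) a) ^+ 2.
Proof.
have := @horner_prodw F L n mu c 1 (expr1n L n).
rewrite !hornerPc expr1n.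
under eq_bigr => i _ do rewrite expr1n mulr1.
under [X in _ = X * _]eq_bigr => i _ do rewrite expr1n mulr1.
under [X in _ = _ * X]eq_bigr => i _ do rewrite expr1n mulr1.
rewrite -!rmorph_sum -rmorphM => /fmorph_inj E.
by rewrite !big_tuple E expr2.
Qed.

Lemma wt_card (F : fieldType) (n : nat) (c : n.-tuple F) :
  wt c = #|[set i : 'I_n | tnth c i != 0]|.
Proof.
rewrite /wt -sum1_count big_tuple -sum1_card.
by apply: eq_bigl => i; rewrite inE.
Qed.

Lemma wt_prodw (F : fieldType) (n mu : nat) (c : n.-tuple F) :
  (wt (prodw mu c) <= wt c ^ 2)%N.
Proof.
rewrite !wt_card -mulnn -cardsX.
case: n c => [|n] c.
  by rewrite (_ : [set _ | _] = set0) ?cards0 //; apply/setP => -[].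
set S := [set i | tnth c i != 0].
pose f := fun p : 'I_n.+1 * 'I_n.+1 =>
  (Ordinal (ltn_pmod (p.1 + p.2 * mu) (ltn0Sn n)) : 'I_n.+1).
apply: leq_trans (leq_imset_card f (setX S S)).
apply: subset_leq_card; apply/subsetP => k; rewrite inE tnth_prodw => nz.
case: (boolP (k \in f @: setX S S)) => // notin; exfalso; move/negP: nz; apply.
apply/eqP; apply: big1 => i _; apply: big1 => j _.
case: ifP => // E.
case: (boolP (tnth c i == 0)) => [/eqP->|ni]; first by rewrite mul0r.
case: (boolP (tnth c j == 0)) => [/eqP->|nj]; first by rewrite mulr0.
exfalso; move/negP: notin; apply; apply/imsetP; exists (i, j).
  by rewrite !inE ni nj.
by apply: val_inj; rewrite /= (eqP E).
Qed.

Lemma gen_dvd (L : fieldType) (n : nat) (th : L) (R : seq nat) (P : {poly L}) :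
  n.-primitive_root th -> uniq R -> (forall k, k \in R -> (k < n)%N) ->
  (forall k, (k < n)%N -> k \notin R -> root P (th ^+ k)) ->
  ('X^n - 1) %/ \prod_(k <- R) ('X - (th ^+ k)%:P) %| P.
Proof.
move=> prim uR Rn HP.
set S := [seq k <- iota 0 n | k \notin R].
have pe : perm_eq (iota 0 n) (S ++ R).
  rewrite -(perm_filterC (fun k => k \notin R) (iota 0 n)) perm_cat2l.
  apply: uniq_perm; rewrite ?filter_uniq ?iota_uniq //.
  move=> x; rewrite mem_filter /= negbK mem_iota add0n.
  by case xR: (x \in R) => //=; rewrite (Rn _ xR).
have -> : 'X^n - 1 = \prod_(k <- S) ('X - (th ^+ k)%:P) * \prod_(k <- R) ('X - (th ^+ k)%:P).
  by rewrite -(factor_Xn_sub_1 prim) -big_cat /index_iota subn0; apply: perm_big.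
rewrite mulpK ?monic_neq0 ?monic_prod_XsubC //.
have -> : \prod_(k <- S) ('X - (th ^+ k)%:P) = \prod_(z <- map (fun k => th ^+ k) S) ('X - z%:P).
  by rewrite big_map.
apply: uniq_roots_dvdp.
  apply/allP => z /mapP[k]; rewrite mem_filter mem_iota add0n => /andP[kR kn] ->.
  exact: HP.
rewrite uniq_rootsE map_inj_in_uniq ?filter_uniq ?iota_uniq // => x y.
rewrite !mem_filter !mem_iota !add0n => /andP[_ xn] /andP[_ yn] /eqP.
by rewrite (eq_prim_root_expr prim) !modn_small // => /eqP.
Qed.

Lemma mem_D0 (p m : nat) : (0 < p)%N -> qr_mod p m -> (m %% p)%N \in D0 p.
Proof.
move=> p0 q; rewrite mem_filter mem_iota.
have qm : qr_mod p (m %% p)%N by rewrite /qr_mod !modn_mod.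
rewrite qm /= add1n prednK // ltn_pmod // andbT lt0n.
by case/andP: q.
Qed.

Lemma root_prodX (L : fieldType) (s : seq nat) (f : nat -> L) (k : nat) :
  k \in s -> root (\prod_(i <- s) ('X - (f i)%:P)) (f k).
Proof. by move=> ks; rewrite -(big_map f xpredT (fun z => 'X - z%:P)) root_prod_XsubC map_f. Qed.

Lemma vanish (F : fieldType) (L : fieldExtType F) (n1 n2 g nu : nat) (th : L)
  (c : (n1 * n2).-tuple F) :
  prime n1 -> prime n2 -> (n1 * n2).-primitive_root th ->
  in_code (upoly th (Useq (n1 * n2) (n1.-1 * n2.-1 %/ gcdn n1.-1 n2.-1)
                      (gcdn n1.-1 n2.-1) g nu false)
           * dpoly th n2 (D0 n1) * dpoly th n1 (D0 n2)) c ->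
  forall x, Zs n1 n2 g nu x -> (Pc L c).[th ^+ x] = 0.
Proof.
move=> pr1 pr2 prim dv x Zx; apply/eqP; apply: (root_dvdp dv); rewrite !rootM.
case: Zx => [U|[[m [-> q]]|[m [-> q]]]].
- apply/orP; left; apply/orP; left.
  by rewrite -(prim_expr_mod prim x) /upoly (root_prodX (fun i => th ^+ i) U).
- apply/orP; left; apply/orP; right.
  rewrite -(prim_expr_mod prim (n2 * m)) [(n1 * n2)%N]mulnC -muln_modr.
  exact: (root_prodX (fun j => th ^+ (n2 * j)) (mem_D0 (prime_gt0 pr1) q)).
- apply/orP; right.
  rewrite -(prim_expr_mod prim (n1 * m)) -muln_modr.
  exact: (root_prodX (fun j => th ^+ (n1 * j)) (mem_D0 (prime_gt0 pr2) q)).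
Qed.

Lemma bigminn_le (I : eqType) (r : seq I) (P : pred I) (F : I -> nat) (x : nat) (j : I) :
  j \in r -> P j -> (\big[minn/x]_(i <- r | P i) F i <= F j)%N.
Proof.
elim: r => // a r IH; rewrite in_cons big_cons => /orP[/eqP<-|jr] Pj.
  by rewrite Pj geq_minl.
case: (P a); last exact: IH.
exact: leq_trans (geq_minr _ _) (IH jr Pj).
Qed.

Lemma side (F : finFieldType) (L : fieldExtType F) (n : nat) (gen gen' : {poly L}) :
  (forall c : n.-tuple F, in_code gen c -> oddlike c ->
     exists c' : n.-tuple F, [&& in_code gen' c', oddlike c' & (wt c' <= wt c ^ 2)%N]) ->
  (min_oddlike_weight n gen' <= min_oddlike_weight n gen ^ 2)%N.
Proof.
move=> H.
have minle : forall (h : {poly L}) (c : n.-tuple F), in_code h c -> oddlike c ->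
    (min_oddlike_weight n h <= wt c)%N.
  move=> h c ic oc; rewrite /min_oddlike_weight.
  by apply: bigminn_le; rewrite ?mem_index_enum ?ic ?oc.
have cases : min_oddlike_weight n gen = n \/
    exists c : n.-tuple F, (in_code gen c && oddlike c) /\ min_oddlike_weight n gen = wt c.
  rewrite /min_oddlike_weight.
  apply: (big_ind (fun v => v = n \/ exists c : n.-tuple F,
     (in_code gen c && oddlike c) /\ v = wt c)); first by left.
    by move=> a b Ha Hb; cbv beta; case: (leqP a b).
  by move=> c Pc; right; exists c.
have len : (min_oddlike_weight n gen' <= n)%N.
  rewrite /min_oddlike_weight; apply: (big_ind (fun v => v <= n)%N) => //.
    by move=> a b Ha _; apply: leq_trans (geq_minl a b) Ha.
  by move=> c _; rewrite /wt (leq_trans (count_size _ _)) // size_tuple.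
case: cases => [->|[c [/andP[ic oc] ->]]].
  apply: (leq_trans len); case: (posnP n) => [->|n0] //; by rewrite expnS expn1 leq_pmulr.
have [c' /and3P[ic' oc' wc']] := H c ic oc.
exact: leq_trans (minle _ _ ic' oc') wc'.
Qed.

Lemma R_prod (L : fieldType) (th : L) (m : nat) (D : seq nat) :
  ('X - 1) * dpoly th m D = \prod_(k <- 0%N :: map (muln m) D) ('X - (th ^+ k)%:P).
Proof. by rewrite big_cons expr0 big_map. Qed.

Lemma R_uniq (m p : nat) : (0 < m)%N -> uniq (0%N :: map (muln m) (D1 p)).
Proof.
move=> m0 /=; rewrite map_inj_in_uniq ?filter_uniq ?iota_uniq ?andbT; last 2 first.
  by [].
  by move=> x y _ _ E; apply/eqP; rewrite -(eqn_pmul2l m0) E.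
  apply/mapP => -[j]; rewrite mem_filter mem_iota => /andP[_ /andP[j1 _]] /esym /eqP.
  rewrite muln_eq0 => /orP[/eqP m0'|/eqP j0]; [by rewrite m0' in m0 | by rewrite j0 in j1].
Qed.

Lemma R_bound (m p k : nat) : prime m -> prime p -> k \in 0%N :: map (muln m) (D1 p) ->
  (k < p * m)%N.
Proof.
move=> pm pp; rewrite in_cons => /orP[/eqP->|/mapP[j]].
  by rewrite muln_gt0 !prime_gt0.
rewrite mem_filter mem_iota => /andP[_ /andP[_ jp]] ->.
rewrite mulnC ltn_pmul2r ?prime_gt0 //.
by move: jp; rewrite add1n prednK ?prime_gt0.
Qed.

Lemma root_prodw (F : fieldType) (L : fieldExtType F) (n mu : nat) (th : L)
  (c : n.-tuple F) (k : nat) : n.-primitive_root th ->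
  ((Pc L c).[th ^+ k] = 0 \/ (Pc L c).[th ^+ (k * mu)] = 0) ->
  root (Pc L (prodw mu c)) (th ^+ k).
Proof.
move=> prim H; rewrite /root horner_prodw; last by rewrite exprAC (prim_expr_order prim) expr1n.
by rewrite -exprM; case: H => ->; rewrite ?mul0r ?mulr0.
Qed.

Lemma oddlike_prodw (F : fieldType) (L : fieldExtType F) (n mu : nat) (c : n.-tuple F) :
  oddlike c -> oddlike (prodw mu c).
Proof. by rewrite /oddlike (sum_prodw L) => H; rewrite expf_neq0. Qed.

Unset Implicit Arguments.

Theorem mainTheorem3 (F : finFieldType) (L : fieldExtType F)
  (q n1 n2 g1 g2 g nu : nat) (theta : L) :
  let n := (n1 * n2)%N in
  let d := gcdn n1.-1 n2.-1 in
  let e := (n1.-1 * n2.-1 %/ d)%N in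
  prime n1 -> prime n2 -> odd n1 -> odd n2 -> n1 != n2 ->
  #|F| = q -> coprime q n ->
  is_prim_root_mod n1 g1 -> is_prim_root_mod n2 g2 ->
  (g = g1 %[mod n1])%N -> (g = g2 %[mod n2])%N ->
  (nu = g %[mod n1])%N -> (nu = 1 %[mod n2])%N ->
  n.-primitive_root theta ->
  (q %% n)%N \in Useq n e d g nu false ->
  qr_mod n1 q -> qr_mod n2 q ->
  let gen000 := upoly theta (Useq n e d g nu false)
                 * dpoly theta n2 (D0 n1) * dpoly theta n1 (D0 n2) in
  let gen1_1 := ('X^n - 1) %/ (('X - 1) * dpoly theta n2 (D1 n1)) in
  let gen1_2 := ('X^n - 1) %/ (('X - 1) * dpoly theta n1 (D1 n2)) in
  (maxn (min_oddlike_weight (F:=F) n gen1_1) (min_oddlike_weight (F:=F) n gen1_2)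
     <= (min_oddlike_weight (F:=F) n gen000) ^ 2)%N.
Proof.
move=> n d e pr1 pr2 on1 on2 n12 Fq cop pg1 pg2 Eg1 Eg2 Enu1 Enu2 prim qU qr1 qr2.
cbv zeta.
have V := @vanish F L n1 n2 g nu theta.
rewrite geq_max; apply/andP; split; apply: side => c ic oc.
- exists (prodw (g * nu ^ (n1.-1 * n2.-1).-1)%N c).
  rewrite wt_prodw oddlike_prodw // andbT.
  rewrite /in_code R_prod andbT; apply: gen_dvd => //.
  + exact: R_uniq (prime_gt0 pr2).
  + by move=> k kR; rewrite /n; apply: R_bound.
  move=> k kn; rewrite in_cons negb_or => /andP[k0 kD].
  apply: root_prodw => //.
  have kb : (0 < k < n1 * n2)%N by rewrite lt0n k0.
  by case: (cover1 pr1 pr2 n12 pg1 pg2 Eg1 Eg2 Enu1 Enu2 kb kD) => Z;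
    [left|right]; apply: V.
- exists (prodw (nu ^ (n1.-1 * n2.-1).-1)%N c).
  rewrite wt_prodw oddlike_prodw // andbT.
  rewrite /in_code R_prod andbT; apply: gen_dvd => //.
  + exact: R_uniq (prime_gt0 pr1).
  + by move=> k kR; rewrite /n mulnC; apply: R_bound.
  move=> k kn; rewrite in_cons negb_or => /andP[k0 kD].
  apply: root_prodw => //.
  have kb : (0 < k < n1 * n2)%N by rewrite lt0n k0.
  by case: (cover2 pr1 pr2 n12 on1 pg1 pg2 Eg1 Eg2 Enu1 Enu2 kb kD) => Z;
    [left|right]; apply: V.
Qed.
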